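(* Let $\mathcal{C}$ be a non-attacking $q$-configuration. Then there exists $N$ such that for all $n \ge N$ we have $\mathcal{C} \subset \mathcal{B}_n$ and $$\mathrm{cover}_n(\mathcal{C}) = (4n-3)q - \mathrm{inloss}_n(\mathcal{C}) - \mathrm{cenloss}_n(\mathcal{C}).$$
   Context: For $n \in \mathbb{N}$ let $I_n = \{\lfloor (2-n)/2 \rfloor, \ldots, \lfloor n/2 \rfloor\}$ and $\mathcal{B}_n = I_n \times I_n$. A configuration is a finite set $\mathcal{C} \subset \mathbb{Z}\times\mathbb{Z}$; a $q$-configuration has $|\mathcal{C}|=q$. For $Q=(x,y)$, $A(Q) = \{(x+i,y),(x,y+i),(x+i,y+i),(x+i,y-i) : i \in \mathbb{Z}\setminus\{0\}\}$, $A(\mathcal{C}) = \bigcup_{Q\in\mathcal{C}} A(Q)$, and $\mathrm{cover}_n(\mathcal{C}) = |(\mathcal{C}\cup A(\mathcal{C}))\cap \mathcal{B}_n|$. $\mathcal{C}$ is non-attacking if $Q'\notin A(Q)$ for all distinct $Q,Q'\in\mathcal{C}$. The attacking number is $a_{\mathcal{C}}(s) = \#\{Q \in \mathcal{C} : s \in A(Q)\}$ and the internal loss is $\mathrm{inloss}_n(\mathcal{C}) = \sum_{s \in A(\mathcal{C})\cap\mathcal{B}_n} (a_{\mathcal{C}}(s) - 1)$. The centralized loss of a Queen $Q=(x,y)$ on $\mathcal{B}_n$ is $\mathrm{cenloss}_n(Q) = 2\max\{|x|,|y|\}$ if $n$ is odd, and $\mathrm{cenloss}_n(Q) = 1 +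 2\min_{c}\max\{|x-c_1|,|y-c_2|\}$ if $n$ is even, the minimum over the four central squares $c=(c_1,c_2)\in\{(0,0),(1,0),(0,1),(1,1)\}$; and $\mathrm{cenloss}_n(\mathcal{C}) = \sum_{Q\in\mathcal{C}}\mathrm{cenloss}_n(Q)$. *)

(* Defs.v *)
From mathcomp Require Import all_boot all_order all_algebra.
Set Implicit Arguments. Unset Strict Implicit. Unset Printing Implicit Defensive.
Import Order.TTheory GRing.Theory Num.Theory.
Local Open Scope ring_scope.

Definition square := (int * int)%type.

(* I_n = { floor((2-n)/2), ..., floor(n/2) }  ( %/ on int with divisor 2 is floor) *)
Definition Ilo (n : nat) : int := ((2 - n%:Z) %/ 2)%Z.
Definition Ihi (n : nat) : int := ((n%:Z) %/ 2)%Z.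
Definition In (n : nat) : seq int :=
  [seq Ilo n + i%:Z | i <- iota 0 (absz (Ihi n - Ilo n + 1))].
Definition Bn (n : nat) : seq square := [seq (a, b) | a <- In n, b <- In n].

Definition inA (Q s : square) : bool :=
  (s != Q) &&
  [|| s.1 == Q.1, s.2 == Q.2, s.1 - Q.1 == s.2 - Q.2 | s.1 - Q.1 == Q.2 - s.2].

Definition is_config (C : seq square) : bool := uniq C.

Definition non_attacking (C : seq square) : Prop :=
  forall Q Q', Q \in C -> Q' \in C -> Q != Q' -> ~~ inA Q Q'.

Definition inAC (C : seq square) (s : square) : bool := has (fun Q => inA Q s) C.

Definition coverq (n : nat) (C : seq square) : nat :=
  count (fun s => (s \in C) || inAC C s) (Bn n).

Definition attnum (C : seq square) (s : square) : nat := count (fun Q => inA Q s) C.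

Definition inloss (n : nat) (C : seq square) : nat :=
  (\sum_(s <- Bn n | inAC C s) (attnum C s - 1))%N.

Definition cenlossQ (n : nat) (Q : square) : nat :=
  if odd n then (2 * maxn (absz (Q.1)) (absz (Q.2)))%N
  else (1 + 2 * minn (minn (maxn (absz (Q.1 - 0)) (absz (Q.2 - 0))) (maxn (absz (Q.1 - 1)) (absz (Q.2 - 0))))
                     (minn (maxn (absz (Q.1 - 0)) (absz (Q.2 - 1))) (maxn (absz (Q.1 - 1)) (absz (Q.2 - 1)))))%N.

Definition cenloss (n : nat) (C : seq square) : nat := (\sum_(Q <- C) cenlossQ n Q)%N.

(* Main.v *)
Require Import Defs.
From mathcomp Require Import all_boot all_order all_algebra.
From mathcomp Require Import zify.
Import Order.TTheory GRing.Theory Num.Theory.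
Local Open Scope ring_scope.
Lemma Ihi_val n : Ihi n = (n./2)%:Z.
Proof. rewrite /Ihi. have := odd_double_half n. case: (odd n) => /= H.
 have -> : (n%:Z) = ((n./2)%:Z) * 2 + 1 by lia. by rewrite divzMDl // (divz_small (m:=1)) ?addr0.
 have -> : (n%:Z) = ((n./2)%:Z) * 2 + 0 by lia. by rewrite divzMDl // div0z addr0.
Qed.
Lemma Ilo_val n : Ilo n = if odd n then - (n./2)%:Z else 1 - (n./2)%:Z.
Proof. rewrite /Ilo. have := odd_double_half n. case: (odd n) => /= H.
 have -> : (2 - n%:Z) = (-(n./2)%:Z) * 2 + 1 by lia. by rewrite divzMDl // (divz_small (m:=1)) ?addr0.
 have -> : (2 - n%:Z) = (1-(n./2)%:Z) * 2 + 0 by lia. by rewrite divzMDl // div0z addr0.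
Qed.
Lemma In_eq n : In n = [seq Ilo n + i%:Z | i <- iota 0 n].
Proof. rewrite /In. congr (map _ (iota 0 _)). rewrite Ihi_val Ilo_val.
have := odd_double_half n. case: odd => /= H; lia. Qed.
Lemma mem_In n x : (x \in In n) = (Ilo n <= x) && (x < Ilo n + n%:Z).
Proof. rewrite In_eq. apply/mapP/andP => [[i]|[h1 h2]].
  rewrite mem_iota => /andP[_ hi] ->; split; lia.
exists (absz (x - Ilo n)). rewrite mem_iota; lia. lia. Qed.
Lemma uniq_In n : uniq (In n).
Proof. rewrite In_eq map_inj_uniq ?iota_uniq // => i j /= h. lia. Qed.
Lemma mem_Bn n s : (s \in Bn n) = (s.1 \in In n) && (s.2 \in In n).
Proof. apply/allpairsP/andP => [[p [h1 h2 ->]]|[h1 h2]] //. by exists s; case: s h1 h2. Qed.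
Lemma uniq_Bn n : uniq (Bn n).
Proof. apply: allpairs_uniq; rewrite ?uniq_In // => -[a b] [c d] _ _ /= ->. done. Qed.
Lemma count_ap (s t : seq int) (P : pred square) :
  count P [seq (a, b) | a <- s, b <- t] = sumn [seq count (fun b => P (a, b)) t | a <- s].
Proof. elim: s => //= a s IH. by rewrite count_cat count_map IH. Qed.
Lemma count_Bn n (P : pred square) :
  count P (Bn n) = sumn [seq count (fun b => P (a, b)) (In n) | a <- In n].
Proof. exact: count_ap. Qed.
Lemma count_win (a b : int) n :
  count (fun i : nat => (a <= i%:Z) && (i%:Z < b)) (iota 0 n)
  = (minn (absz (Num.max b 0)) n - absz (Num.max a 0))%N.
Proof. elim: n => [|n IH]; first by rewrite /=; lia.
rewrite -addn1 iotaD count_cat IH /= addn0.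
case: (boolP ((a <= n%:Z) && (n%:Z < b))) => /= h; lia. Qed.
Lemma sumn_const (T : Type) (P : pred T) c s : sumn [seq (P a) * c | a <- s]%N = (count P s * c)%N.
Proof. elim: s => //= a s ->. by rewrite mulnDl. Qed.
Lemma sumn_b (T : Type) (P : pred T) s : sumn [seq nat_of_bool (P a) | a <- s] = count P s.
Proof. exact: sumn_count. Qed.
Lemma size_In n : size (In n) = n.
Proof. by rewrite In_eq size_map size_iota. Qed.
Lemma cnt1 (T : eqType) (s : seq T) x : uniq s -> count (fun a => a == x) s = (x \in s).
Proof. exact: count_uniq_mem. Qed.
Lemma sumn_mc (T : Type) c (s : seq T) : sumn [seq c | _ <- s] = (c * size s)%N.
Proof. elim: s => [|_ s IH] /=; [by rewrite muln0 | by rewrite IH mulnS]. Qed.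
Lemma count_UI (T : Type) (a1 a2 : pred T) s :
  count (fun z => a1 z || a2 z) s = (count a1 s + count a2 s - count (fun z => a1 z && a2 z) s)%N.
Proof. have := count_predUI a1 a2 s.
have -> : count (predU a1 a2) s = count (fun z => a1 z || a2 z) s by apply: eq_count.
have -> : count (predI a1 a2) s = count (fun z => a1 z && a2 z) s by apply: eq_count.
lia. Qed.

Lemma cnt_Q n x y : x \in In n -> y \in In n ->
 (count (inA (x,y)) (Bn n))%:Z = 4 * n%:Z - 4 - (absz (x - y))%:Z - (absz (x + y - 2 * Ilo n - n%:Z + 1))%:Z.
Proof.
move=> hx hy.
have UB := uniq_Bn n; have UI := uniq_In n.
have hQ : (x, y) \in Bn n by rewrite mem_Bn hx hy.
set L1 := fun s : square => s.1 == x.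
set L2 := fun s : square => s.2 == y.
set L3 := fun s : square => s.1 - x == s.2 - y.
set L4 := fun s : square => s.1 - x == y - s.2.
have c1 : count L1 (Bn n) = n.
  rewrite count_Bn (eq_map (g := fun a => (a == x) * n)%N); last first.
    move=> a /=. rewrite /L1 /=. case: (a == x); last by rewrite count_pred0.
    by rewrite count_predT size_In mul1n.
  by rewrite sumn_const cnt1 // hx mul1n.
have c2 : count L2 (Bn n) = n.
  rewrite count_Bn (eq_map (g := fun a => 1%N)); last first.
    by move=> a /=; rewrite /L2 /= cnt1 // hy.
  by rewrite sumn_mc size_In mul1n.
have c3 : count L3 (Bn n) = (n - absz (x - y))%N.
  rewrite count_Bn (eq_map (g := fun a => nat_of_bool (a - x + y \in In n))); last first.
    move=> a /=; rewrite /L3 /= -cnt1 //; apply: eq_count => b. apply/eqP/eqP; lia.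
  rewrite sumn_b.
  have -> : count (fun a => a - x + y \in In n) (In n) =
     count (fun i : nat => (x - y <= i%:Z) && (i%:Z < n%:Z + x - y)) (iota 0 n).
    rewrite [X in count _ X]In_eq count_map. apply: eq_count => i /=. rewrite mem_In.
    apply/idP/idP; move/andP => [h1 h2]; apply/andP; split; lia.
  rewrite count_win. move: hx hy; rewrite !mem_In; lia.
have c4 : count L4 (Bn n) = (n - absz (x + y - 2 * Ilo n - n%:Z + 1)%R)%N.
  rewrite count_Bn (eq_map (g := fun a => nat_of_bool (x + y - a \in In n))); last first.
    move=> a /=; rewrite /L4 /= -cnt1 //; apply: eq_count => b. apply/eqP/eqP; lia.
  rewrite sumn_b.
  have -> : count (fun a => x + y - a \in In n) (In n) =
     count (fun i : nat => (x + y - 2 * Ilo n - n%:Z + 1 <= i%:Z) && (i%:Z < x + y - 2 * Ilo n + 1)) (iota 0 n).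
    rewrite [X in count _ X]In_eq count_map. apply: eq_count => i /=. rewrite mem_In.
    apply/idP/idP; move/andP => [h1 h2]; apply/andP; split; lia.
  rewrite count_win. move: hx hy; rewrite !mem_In; lia.
have one : forall P : pred square, (forall a b, P (a, b) = (a == x) && (b == y)) -> count P (Bn n) = 1%N.
  move=> P hP. rewrite (eq_count (a2 := fun s => s == (x,y))); last by move=> -[a b]; rewrite hP xpair_eqE.
  by rewrite cnt1 // hQ.
have e1 : (count (inA (x, y)) (Bn n) + 1 = count (fun s => L1 s || (L2 s || (L3 s || L4 s))) (Bn n))%N.
  have := @count_UI _ (inA (x, y)) (fun s => s == (x, y)) (Bn n).
  rewrite (one (fun s => s == (x,y))); last by move=> a b; rewrite xpair_eqE.
  rewrite (eq_count (a1 := fun s => inA (x,y) s && (s == (x,y))) (a2 := pred0)) ?count_pred0; last by move=> -[a b]; rewrite /inA !xpair_eqE /=; lia.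
  rewrite (eq_count (a2 := fun s => L1 s || (L2 s || (L3 s || L4 s)))); last first.
    by move=> -[a b]; rewrite /inA /L1 /L2 /L3 /L4 !xpair_eqE /=; lia.
  have := @count_predUI _ (inA (x, y)) (fun s => s == (x, y)) (Bn n). lia.
have e2 := @count_UI _ L1 (fun s => L2 s || (L3 s || L4 s)) (Bn n).
rewrite (one (fun s => L1 s && (L2 s || (L3 s || L4 s)))) in e2; last by move=> a b; rewrite /L1 /L2 /L3 /L4 /=; lia.
have e3 := @count_UI _ L2 (fun s => L3 s || L4 s) (Bn n).
rewrite (one (fun s => L2 s && (L3 s || L4 s))) in e3; last by move=> a b; rewrite /L2 /L3 /L4 /=; lia.
have e4 := @count_UI _ L3 L4 (Bn n).
rewrite (one (fun s => L3 s && L4 s)) in e4; last by move=> a b; rewrite /L3 /L4 /=; lia.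
have hc3 : (1 <= count L3 (Bn n))%N by rewrite -has_count; apply/hasP; exists (x, y); rewrite // /L3 /= !subrr.
have hc4 : (1 <= count L4 (Bn n))%N by rewrite -has_count; apply/hasP; exists (x, y); rewrite // /L4 /= !subrr.
have hc2 : (1 <= count L2 (Bn n))%N by rewrite -has_count; apply/hasP; exists (x, y); rewrite // /L2 /=.
have hV : (count L2 (Bn n) <= count (fun s => L2 s || (L3 s || L4 s)) (Bn n))%N.
  apply: sub_count => s; rewrite /= => ->. done.
have hW : (count L3 (Bn n) <= count (fun s => L3 s || L4 s) (Bn n))%N.
  apply: sub_count => s; rewrite /= => ->. done.
move: c1 c2 c3 c4 e1 e2 e3 e4 hc3 hc4 hc2 hV hW. lia.
Qed.
Lemma cen_Q n x y : (cenlossQ n (x, y))%:Z = (absz (x - y))%:Z + (absz (x + y - 2 * Ilo n - n%:Z + 1))%:Z.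
Proof. rewrite /cenlossQ Ilo_val /=. have := odd_double_half n. case: (odd n) => /= H; lia. Qed.
Lemma count_big (T : Type) (a : pred T) s : count a s = \sum_(x <- s) nat_of_bool (a x).
Proof. elim: s => [|x s IH]; by rewrite ?big_nil ?big_cons //= IH. Qed.
Lemma sum_int (C : seq square) (f g : square -> nat) (c : int) :
  (forall Q, Q \in C -> (f Q)%:Z = c - (g Q)%:Z) ->
  (\sum_(Q <- C) f Q)%:Z = c * (size C)%:Z - (\sum_(Q <- C) g Q)%:Z.
Proof. elim: C => [|Q C IH] h; first by rewrite !big_nil /=; lia.
rewrite !big_cons /=. have h1 := h Q (mem_head _ _).
have h2 := IH (fun Q' hQ' => h Q' (ltac:(by rewrite in_cons hQ' orbT))). lia. Qed.

Theorem mainTheorem5 (q : nat) (C : seq square) :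
  is_config C -> size C = q -> non_attacking C ->
  exists N : nat, forall n : nat, (N <= n)%N ->
    all (fun Q => Q \in Bn n) C /\
    (coverq n C)%:Z =
      (4 * n%:Z - 3) * q%:Z - (inloss n C)%:Z - (cenloss n C)%:Z.
Proof.
move=> uC sC hna.
set M := (\max_(Q <- C) maxn (absz Q.1) (absz Q.2))%N.
exists (2 * M + 2)%N => n hn.
have hB : forall Q, Q \in C -> Q \in Bn n.
  move=> Q hQ. have := @leq_bigmax_seq _ C xpredT (fun Q : square => maxn (absz Q.1) (absz Q.2)) Q hQ (erefl true).
  rewrite -/M mem_Bn !mem_In Ilo_val. have := odd_double_half n.
  case: (odd n) => /= H1 H2; lia.
split; first by apply/allP.
set B := Bn n.
have UB : uniq B := uniq_Bn n.
have cC : count (mem C) B = q.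
  rewrite -size_filter -sC. apply: perm_size. apply: uniq_perm; rewrite ?filter_uniq //.
  move=> s. rewrite mem_filter. apply/andP/idP => [[]//|h]. by split => //; apply: hB.
have cov : coverq n C = (q + count (inAC C) B)%N.
  rewrite /coverq -/B -cC.
  have := @count_UI _ (mem C) (inAC C) B.
  rewrite (eq_count (a1 := fun z => (z \in C) && inAC C z) (a2 := pred0)) ?count_pred0.
    by move=> ->; rewrite subn0.
  move=> s /=. apply/negbTE/negP => /andP[hs /hasP[Q hQ hA]].
  have hne : Q != s by move: hA; rewrite /inA eq_sym => /andP[].
  by move: (hna Q s hQ hs hne); rewrite hA.
have sumA : (\sum_(Q <- C) count (inA Q) B = inloss n C + count (inAC C) B)%N.
  under eq_bigr do rewrite count_big.
  rewrite exchange_big /=.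
  rewrite /inloss -/B count_big [in RHS]big_mkcond /= -big_split /=.
  apply: eq_bigr => s _. rewrite -count_big -/(attnum C s).
  case: (boolP (inAC C s)) => h /=.
    move: h; rewrite /inAC has_count /attnum. lia.
  move: h; rewrite /inAC has_count /attnum. lia.
have sumZ := @sum_int C (fun Q => count (inA Q) B) (cenlossQ n) (4 * n%:Z - 4).
rewrite -/(cenloss n C) sC sumA in sumZ.
have : (inloss n C + count (inAC C) B)%:Z = (4 * n%:Z - 4) * q%:Z - (cenloss n C)%:Z.
  apply: sumZ => -[x y] hQ. have := hB _ hQ; rewrite mem_Bn /= => /andP[hx hy].
  rewrite /B cnt_Q // cen_Q. lia.
rewrite cov. nia.
Qed.
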